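(* For $c>0$ let $\mathfrak{C}_c$ be the catenoid of parameter $c$ described in the context and let $\Gamma_c=\mathfrak{C}_c\cap\{x_3=0\}$. Then, as $c\to+\infty$, $\Gamma_c$ converges uniformly to the origin, i.e. $\sup_{(x_1,x_2,0)\in\Gamma_c}\sqrt{x_1^2+x_2^2}\to0$.
   Context: $\widetilde{E(2)}$ is $\mathbb{R}^3$ with coordinates $(x_1,x_2,x_3)$ and group law $(a_1,b_1,c_1)*(a_2,b_2,c_2)=(a_1+a_2\cos c_1-b_2\sin c_1,\ b_1+a_2\sin c_1+b_2\cos c_1,\ c_1+c_2)$, with the left-invariant metric $\lambda_1^2(\cos x_3\,dx_1+\sin x_3\,dx_2)^2+\lambda_2^2(-\sin x_3\,dx_1+\cos x_3\,dx_2)^2+\frac{1}{\lambda_1^2\lambda_2^2}dx_3^2$, where either $\lambda_1>\lambda_2>0$ or $\lambda_1=\lambda_2=1$. For $c>0$: $\theta_c^+=\pi$ if $c>\sqrt2\lambda_1$, $\theta_c^+=\arccos(1-c^2/\lambda_1^2)$ if $0<c\le\sqrt2\lambda_1$; $\Omega=\{(c,\theta):c>0,\ |\theta|<\theta_c^+\}$. For $(c,\theta)\in\Omega$: $D=\sin\theta/c$; $\varphi$ is the global solution of $\varphi'(u)=\sqrt{c^2+2\cos\theta\,B(u)-D^2B(u)^2}$, $\varphi(0)=0$, with $B(u)=\lambda_1^2\cos^2\varphi(u)+\lambda_2^2\sin^2\varphi(u)$; $U>0$ is the unique number with $\varphi(U)=\pi$; $f$ solves $f'=DB$, $f(0)=0$;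 $G(u)=\int_0^u\frac{c-\varphi'(s)}{B(s)}ds$; $H(c,\theta)=Df(U)+cG(U)$; $\widetilde{\theta_c}$ is the unique $\theta\in(0,\pi/2)\cap(0,\theta_c^+)$ with $H(c,\theta)=0$. The catenoid $\mathfrak{C}_c$ is the image of $X=(x_1,x_2,x_3):\mathbb{C}\to\widetilde{E(2)}$ built with $\theta=\widetilde{\theta_c}$: $x_3(u+iv)=-\lambda_1\lambda_2Dv+\lambda_1\lambda_2G(u)$; with $A=f(u)+cv$, $M_1=c\cos x_3\cosh A-\lambda_1\lambda_2D\sin x_3\sinh A$, $M_2=c\cos x_3\sinh A-\lambda_1\lambda_2D\sin x_3\cosh A$, $M_3=c\sin x_3\sinh A+\lambda_1\lambda_2D\cos x_3\cosh A$, $M_4=c\sin x_3\cosh A+\lambda_1\lambda_2D\cos x_3\sinh A$, $x_1=-\frac{1}{(c^2+\lambda_1^2\lambda_2^2D^2)B}[\frac{1}{\lambda_1}f'\cos\varphi\,M_1-\frac{1}{\lambda_1}(c-\varphi')\sin\varphi\,M_2-\frac{1}{\lambda_2}(c-\varphi')\cos\varphi\,M_3-\frac{1}{\lambda_2}f'\sin\varphi\,M_4]$, $x_2=-\frac{1}{(c^2+\lambda_1^2\lambda_2^2D^2)B}[\frac{1}{\lambda_1}f'\cos\varphi\,M_4-\frac{1}{\lambda_1}(c-\varphi')\sin\varphi\,M_3+\frac{1}{\lambda_2}(c-\varphi')\cos\varphi\,M_2+\frac{1}{\lambda_2}f'\sin\varphi\,M_1]$ (functions of $u$ evaluated at $u$).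 *)

(* Defs.v *)
From Stdlib Require Import Reals ClassicalEpsilon.
From Coquelicot Require Import Coquelicot.
Open Scope R_scope.

Definition theta_plus (l1 c : R) : R :=
  if Rlt_dec (sqrt 2 * l1) c then PI else acos (1 - c ^ 2 / l1 ^ 2).

Definition Dc (c th : R) : R := sin th / c.

Definition Bof (l1 l2 : R) (phi : R -> R) (u : R) : R :=
  l1 ^ 2 * (cos (phi u)) ^ 2 + l2 ^ 2 * (sin (phi u)) ^ 2.

Definition phi_rhs (l1 l2 c th : R) (phi : R -> R) (u : R) : R :=
  sqrt (c ^ 2 + 2 * cos th * Bof l1 l2 phi u - (Dc c th) ^ 2 * (Bof l1 l2 phi u) ^ 2).

Definition is_phi_sol (l1 l2 c th : R) (phi : R -> R) : Prop :=
  phi 0 = 0 /\ forall u, is_derive phi u (phi_rhs l1 l2 c th phi u).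

Definition phi_of (l1 l2 c th : R) : R -> R :=
  epsilon (inhabits (fun _ => 0)) (is_phi_sol l1 l2 c th).

Definition B_of (l1 l2 c th : R) (u : R) : R := Bof l1 l2 (phi_of l1 l2 c th) u.

Definition phid_of (l1 l2 c th : R) (u : R) : R :=
  phi_rhs l1 l2 c th (phi_of l1 l2 c th) u.

Definition U_of (l1 l2 c th : R) : R :=
  epsilon (inhabits 0) (fun U => 0 < U /\ phi_of l1 l2 c th U = PI).

Definition f_of (l1 l2 c th : R) (u : R) : R :=
  RInt (fun s => Dc c th * B_of l1 l2 c th s) 0 u.

Definition fd_of (l1 l2 c th : R) (u : R) : R := Dc c th * B_of l1 l2 c th u.

Definition G_of (l1 l2 c th : R) (u : R) : R :=
  RInt (fun s => (c - phid_of l1 l2 c th s) / B_of l1 l2 c th s) 0 u.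

Definition H_of (l1 l2 c th : R) : R :=
  Dc c th * f_of l1 l2 c th (U_of l1 l2 c th) + c * G_of l1 l2 c th (U_of l1 l2 c th).

Definition theta_tilde (l1 l2 c : R) : R :=
  epsilon (inhabits 0)
    (fun th => 0 < th < PI / 2 /\ th < theta_plus l1 c /\ H_of l1 l2 c th = 0).

(* The catenoid X = (x1,x2,x3) : C = R^2 -> E(2)~, built with theta = tilde theta_c *)
Section Catenoid.
Variables l1 l2 c u v : R.
Let th := theta_tilde l1 l2 c.
Let D := Dc c th.
Let ph := phi_of l1 l2 c th u.
Let ph' := phid_of l1 l2 c th u.
Let f := f_of l1 l2 c th u.
Let f' := fd_of l1 l2 c th u.
Let B := B_of l1 l2 c th u.
Let G := G_of l1 l2 c th u.

Definition cat_x3 : R := - (l1 * l2 * D * v) + l1 * l2 * G.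

Let x3 := cat_x3.
Let A := f + c * v.
Let M1 := c * cos x3 * cosh A - l1 * l2 * D * sin x3 * sinh A.
Let M2 := c * cos x3 * sinh A - l1 * l2 * D * sin x3 * cosh A.
Let M3 := c * sin x3 * sinh A + l1 * l2 * D * cos x3 * cosh A.
Let M4 := c * sin x3 * cosh A + l1 * l2 * D * cos x3 * sinh A.
Let K := - / ((c ^ 2 + l1 ^ 2 * l2 ^ 2 * D ^ 2) * B).

Definition cat_x1 : R :=
  K * (/ l1 * f' * cos ph * M1 - / l1 * (c - ph') * sin ph * M2
       - / l2 * (c - ph') * cos ph * M3 - / l2 * f' * sin ph * M4).

Definition cat_x2 : R :=
  K * (/ l1 * f' * cos ph * M4 - / l1 * (c - ph') * sin ph * M3
       + / l2 * (c - ph') * cos ph * M2 + / l2 * f' * sin ph * M1).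
End Catenoid.

(* Main.v *)
Require Import Defs.
From Stdlib Require Import Reals Lra Psatz ClassicalEpsilon Ranalysis5 ZArith.
From Coquelicot Require Import Coquelicot.
Open Scope R_scope.

Definition Bp (l1 l2 x : R) : R := l1 ^ 2 * (cos x) ^ 2 + l2 ^ 2 * (sin x) ^ 2.
Definition argp (l1 l2 c th x : R) : R :=
  c ^ 2 + 2 * cos th * Bp l1 l2 x - (Dc c th) ^ 2 * (Bp l1 l2 x) ^ 2.
Definition Fp (l1 l2 c th x : R) : R := sqrt (argp l1 l2 c th x).

Lemma B_bounds l1 l2 x : 0 < l2 <= l1 -> l2 ^ 2 <= Bp l1 l2 x <= l1 ^ 2.
Proof.
  intros H. unfold Bp. pose proof (sin2_cos2 x) as E. unfold Rsqr in E.
  assert (0 <= cos x ^ 2) by nra. assert (0 <= sin x ^ 2) by nra.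
  assert (l2^2 <= l1^2) by nra. split; nra.
Qed.

Lemma D2_le c th : 1 <= c -> (Dc c th) ^ 2 <= 1 / c ^ 2.
Proof.
  intros Hc. unfold Dc. pose proof (sin2_cos2 th) as E. unfold Rsqr in E.
  assert (sin th ^ 2 <= 1) by nra.
  replace ((sin th / c) ^ 2) with (sin th ^ 2 / c ^ 2) by (field; lra).
  apply Rmult_le_compat_r; [|lra]. left; apply Rinv_0_lt_compat; nra.
Qed.

Lemma D2_ge0 c th : 0 <= (Dc c th) ^ 2.
Proof. nra. Qed.

Lemma arg_bounds l1 l2 c th x : 0 < l2 <= l1 -> 4 + 4 * l1 ^ 2 <= c ->
  c ^ 2 / 4 <= argp l1 l2 c th x <= 4 * c ^ 2.
Proof.
  intros Hl Hc. unfold argp.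
  pose proof (B_bounds l1 l2 x Hl) as [B1 B2]. set (B := Bp l1 l2 x) in *.
  assert (1 <= c) by nra.
  pose proof (D2_le c th H) as HD. pose proof (D2_ge0 c th).
  set (D2 := Dc c th ^ 2) in *.
  pose proof (COS_bound th) as [k1 k2].
  assert (0 <= B) by nra.
  assert (D2 * B^2 <= B^2 / c^2).
  { apply (Rmult_le_compat_r (B^2)) in HD; [|nra]. unfold Rdiv in *. nra. }
  assert (B ^ 2 / c ^ 2 <= B ^ 2).
  { unfold Rdiv. assert (0 < / c^2 <= 1). split. apply Rinv_0_lt_compat; nra.
    rewrite <- Rinv_1. apply Rinv_le_contravar; nra. nra. }
  assert (B^2 <= l1^4) by nra.
  assert (-1 * B <= cos th * B <= B) by nra.
  split; nra.
Qed.


Definition Hyp l1 l2 c := 0 < l2 <= l1 /\ 4 + 4 * l1 ^ 2 <= c.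

Lemma F_bounds l1 l2 c th x : Hyp l1 l2 c ->
  c / 2 <= Fp l1 l2 c th x <= 2 * c /\ Fp l1 l2 c th x ^ 2 = argp l1 l2 c th x.
Proof.
  intros [Hl Hc]. pose proof (arg_bounds l1 l2 c th x Hl Hc) as [a1 a2].
  assert (1 <= c) by nra. unfold Fp.
  split; [split|].
  - rewrite <- (sqrt_pow2 (c/2)) by lra. apply sqrt_le_1_alt. nra.
  - rewrite <- (sqrt_pow2 (2*c)) by lra. apply sqrt_le_1_alt. nra.
  - rewrite <- Rsqr_pow2. apply Rsqr_sqrt. nra.
Qed.

Lemma arg_pos l1 l2 c th x : Hyp l1 l2 c -> 0 < argp l1 l2 c th x.
Proof. intros [Hl Hc]. pose proof (arg_bounds l1 l2 c th x Hl Hc). nra. Qed.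

Lemma B_pos l1 l2 c x : Hyp l1 l2 c -> 0 < Bp l1 l2 x.
Proof. intros [Hl _]. pose proof (B_bounds l1 l2 x Hl). nra. Qed.

Lemma Bp_derive l1 l2 x : ex_derive (Bp l1 l2) x.
Proof. unfold Bp. auto_derive. auto. Qed.

Lemma Fp_pos l1 l2 c th x : Hyp l1 l2 c -> 0 < Fp l1 l2 c th x.
Proof. intros H. pose proof (F_bounds l1 l2 c th x H). destruct H. nra. Qed.

Lemma Fp_derive l1 l2 c th x : Hyp l1 l2 c -> ex_derive (Fp l1 l2 c th) x.
Proof.
  intros H. pose proof (arg_pos l1 l2 c th x H) as P.
  unfold Fp, argp, Bp in *. auto_derive. exact P.
Qed.

Definition hk l1 l2 c th x :=
  (Dc c th)^2 * Bp l1 l2 x / Fp l1 l2 c th x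
  + c * (c - Fp l1 l2 c th x) / (Bp l1 l2 x * Fp l1 l2 c th x).

Lemma hk_derive l1 l2 c th x : Hyp l1 l2 c -> ex_derive (hk l1 l2 c th) x.
Proof.
  intros H. pose proof (Fp_derive l1 l2 c th x H). pose proof (Bp_derive l1 l2 x).
  pose proof (Fp_pos l1 l2 c th x H). pose proof (B_pos l1 l2 c x H).
  unfold hk. auto_derive; repeat split; auto; try lra; nra.
Qed.




Lemma deriv_bounds (f df : R -> R) m M a b :
  (forall x, is_derive f x (df x)) -> (forall x, m <= df x <= M) -> a <= b ->
  m * (b - a) <= f b - f a <= M * (b - a).
Proof.
  intros Hd Hb Hab.
  destruct (MVT_gen f a b df) as [z [_ Hz]].
  - intros; apply Hd.
  - intros x _. apply continuity_pt_filterlim. apply (ex_derive_continuous f).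
    eexists; apply Hd.
  - rewrite Hz. pose proof (Hb z). split; nra.
Qed.

Lemma deriv0_const (f : R -> R) a b :
  (forall x, is_derive f x 0) -> f a = f b.
Proof.
  intros Hd. destruct (Rle_lt_dec a b).
  - pose proof (deriv_bounds f (fun _ => 0) 0 0 a b Hd (fun _ => conj (Rle_refl 0) (Rle_refl 0)) r). lra.
  - pose proof (deriv_bounds f (fun _ => 0) 0 0 b a Hd (fun _ => conj (Rle_refl 0) (Rle_refl 0)) (Rlt_le _ _ r)). lra.
Qed.

Lemma RInt_deriv (g : R -> R) x :
  (forall y, continuous g y) -> is_derive (fun y => RInt g 0 y) x (g x).
Proof.
  intros Hc. apply (is_derive_RInt g (fun y => RInt g 0 y) 0 x).
  - apply filter_forall. intros y. apply (RInt_correct g 0 y).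
    apply (@ex_RInt_continuous R_CompleteNormedModule). intros; apply Hc.
  - apply Hc.
Qed.

Lemma ex_RInt_all (g : R -> R) a b : (forall y, continuous g y) -> ex_RInt g a b.
Proof. intros Hc. apply (@ex_RInt_continuous R_CompleteNormedModule). intros; apply Hc. Qed.


Definition Tf l1 l2 c th x := RInt (fun t => / Fp l1 l2 c th t) 0 x.

Section S.
Context (l1 l2 c th : R) (H : Hyp l1 l2 c).

Lemma c_ge1 : 1 <= c.
Proof. destruct H. nra. Qed.

Lemma invF_cont y : continuous (fun t => / Fp l1 l2 c th t) y.
Proof.
  apply (ex_derive_continuous (fun t => / Fp l1 l2 c th t)).
  pose proof (Fp_pos l1 l2 c th y H). pose proof (Fp_derive l1 l2 c th y H).
  auto_derive. split; auto. lra.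
Qed.

Lemma Tf_deriv x : is_derive (Tf l1 l2 c th) x (/ Fp l1 l2 c th x).
Proof. unfold Tf. apply (RInt_deriv (fun t => / Fp l1 l2 c th t)). apply invF_cont. Qed.

Lemma Tf_mono a b : a <= b ->
  (b - a) / (2 * c) <= Tf l1 l2 c th b - Tf l1 l2 c th a <= 2 * (b - a) / c.
Proof.
  intros Hab. pose proof c_ge1.
  assert (forall x, / (2*c) <= / Fp l1 l2 c th x <= 2 / c).
  { intros x. pose proof (F_bounds l1 l2 c th x H) as [[F1 F2] _].
    split. apply Rinv_le_contravar; lra.
    replace (2 / c) with (/ (c/2)) by (field; lra). apply Rinv_le_contravar; lra. }
  pose proof (deriv_bounds (Tf l1 l2 c th) (fun x => / Fp l1 l2 c th x) (/(2*c)) (2/c) a b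
    Tf_deriv H1 Hab).
  unfold Rdiv in *. lra.
Qed.

Lemma Tf0 : Tf l1 l2 c th 0 = 0.
Proof. unfold Tf. rewrite RInt_point. reflexivity. Qed.

Lemma Tf_strict a b : a < b -> Tf l1 l2 c th a < Tf l1 l2 c th b.
Proof.
  intros Hab. pose proof c_ge1. pose proof (Tf_mono a b (Rlt_le _ _ Hab)) as [T _].
  assert (0 < (b - a) / (2 * c)). apply Rdiv_lt_0_compat; lra. lra.
Qed.

Lemma Tf_inj a b : Tf l1 l2 c th a = Tf l1 l2 c th b -> a = b.
Proof.
  intros E. destruct (Rtotal_order a b) as [h|[h|h]]; auto.
  - apply Tf_strict in h. lra.
  - apply Tf_strict in h. lra.
Qed.

Lemma Tf_cont : continuity (Tf l1 l2 c th).
Proof.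
  intros x. apply continuity_pt_filterlim. apply (ex_derive_continuous (Tf l1 l2 c th)).
  eexists; apply Tf_deriv.
Qed.

Lemma Tf_surj u : exists x, Tf l1 l2 c th x = u.
Proof.
  pose proof c_ge1.
  destruct (IVT_gen (Tf l1 l2 c th) (- (2 * c * Rabs u)) (2 * c * Rabs u) u Tf_cont) as [x [_ Hx]].
  - pose proof (Rabs_pos u).
    pose proof (Tf_mono 0 (2 * c * Rabs u)) as [T1 _]. nra.
    pose proof (Tf_mono (- (2 * c * Rabs u)) 0) as [T2 _]. nra.
    rewrite Tf0 in *.
    replace ((2 * c * Rabs u - 0) / (2 * c)) with (Rabs u) in T1 by (field; lra).
    replace ((0 - - (2 * c * Rabs u)) / (2 * c)) with (Rabs u) in T2 by (field; lra).
    pose proof (Rle_abs u). pose proof (Rle_abs (-u)). rewrite Rabs_Ropp in H3.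
    split.
    + apply Rle_trans with (Tf l1 l2 c th (- (2 * c * Rabs u))). apply Rmin_l. lra.
    + apply Rle_trans with (Tf l1 l2 c th (2 * c * Rabs u)). lra. apply Rmax_r.
  - exists x; exact Hx.
Qed.

Definition psi u := epsilon (inhabits 0) (fun x => Tf l1 l2 c th x = u).

Lemma psi_spec u : Tf l1 l2 c th (psi u) = u.
Proof. unfold psi. apply (epsilon_spec (inhabits 0) (fun x => Tf l1 l2 c th x = u)). apply Tf_surj. Qed.

Lemma psi_mono a b : a <= b -> psi a <= psi b.
Proof.
  intros Hab. destruct (Rle_lt_dec (psi a) (psi b)); auto.
  apply Tf_strict in r. rewrite !psi_spec in r. lra.
Qed.

Lemma psi_lip a b : a <= b -> psi b - psi a <= 2 * c * (b - a).
Proof.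
  intros Hab. pose proof c_ge1. pose proof (psi_mono a b Hab).
  pose proof (Tf_mono _ _ H1) as [T _]. rewrite !psi_spec in T.
  apply (Rmult_le_compat_l (2*c)) in T; [|lra].
  replace (2 * c * ((psi b - psi a) / (2 * c))) with (psi b - psi a) in T by (field; lra).
  lra.
Qed.

Lemma psi_cont x : continuity_pt psi x.
Proof.
  pose proof c_ge1.
  intros e He. exists (e / (2 * c)). split. apply Rdiv_lt_0_compat; lra.
  intros y [_ Hy]. simpl in *. unfold R_dist in *.
  destruct (Rle_lt_dec x y).
  - pose proof (psi_lip x y r). pose proof (psi_mono x y r).
    rewrite Rabs_right in Hy by lra. rewrite Rabs_right by lra.
    apply Rle_lt_trans with (2 * c * (y - x)). lra.
    apply (Rmult_lt_compat_l (2*c)) in Hy; [|lra].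
    replace (2 * c * (e / (2 * c))) with e in Hy by (field; lra). lra.
  - pose proof (psi_lip y x (Rlt_le _ _ r)). pose proof (psi_mono y x (Rlt_le _ _ r)).
    rewrite Rabs_left in Hy by lra. rewrite Rabs_left1 by lra.
    apply Rle_lt_trans with (2 * c * (x - y)). lra.
    apply (Rmult_lt_compat_l (2*c)) in Hy; [|lra].
    replace (2 * c * (e / (2 * c))) with e in Hy by (field; lra). lra.
Qed.

Lemma Tf_derivable a : derivable_pt (Tf l1 l2 c th) a.
Proof. exists (/ Fp l1 l2 c th a). apply is_derive_Reals. apply Tf_deriv. Qed.

Lemma psi_deriv x : is_derive psi x (Fp l1 l2 c th (psi x)).
Proof.
  apply is_derive_Reals.
  assert (Hinc : psi (x - 1) <= psi x <= psi (x + 1)).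
  { split; apply psi_mono; lra. }
  pose proof (derivable_pt_lim_recip_interv (Tf l1 l2 c th) psi (x - 1) (x + 1) x
    (fun a _ => Tf_derivable a) (psi_cont x) ltac:(lra) ltac:(lra) Hinc) as K.
  assert (E : derive_pt (Tf l1 l2 c th) (psi x) (Tf_derivable (psi x)) = / Fp l1 l2 c th (psi x)).
  { apply derive_pt_eq_0. apply is_derive_Reals. apply Tf_deriv. }
  pose proof (Fp_pos l1 l2 c th (psi x) H).
  cbv beta in K. rewrite E in K.
  replace (Fp l1 l2 c th (psi x)) with (1 / / Fp l1 l2 c th (psi x)) by (field; lra).
  apply K.
  - intros y _. unfold comp, id. apply psi_spec.
  - apply Rinv_neq_0_compat. lra.
Qed.

End S.


Lemma RInt_lin (f g : R -> R) a b p q : ex_RInt f a b -> ex_RInt g a b ->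
  RInt (fun t => p * f t + q * g t) a b = p * RInt f a b + q * RInt g a b.
Proof.
  intros Hf Hg.
  rewrite (RInt_plus (V:=R_CompleteNormedModule) (fun t => p * f t) (fun t => q * g t)).
  - assert (E1 : RInt (fun t => p * f t) a b = p * RInt f a b)
      by exact (RInt_scal (V:=R_CompleteNormedModule) f a b p Hf).
    assert (E2 : RInt (fun t => q * g t) a b = q * RInt g a b)
      by exact (RInt_scal (V:=R_CompleteNormedModule) g a b q Hg).
    change (RInt (fun t => p * f t) a b + RInt (fun t => q * g t) a b = p * RInt f a b + q * RInt g a b).
    rewrite E1, E2. reflexivity.
  - apply (ex_RInt_scal (V:=R_CompleteNormedModule) f a b p Hf).
  - apply (ex_RInt_scal (V:=R_CompleteNormedModule) g a b q Hg).
Qed.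

Section S.
Context (l1 l2 c th : R) (H : Hyp l1 l2 c).

Lemma psi_sol : is_phi_sol l1 l2 c th (psi l1 l2 c th).
Proof.
  split.
  - apply (Tf_inj l1 l2 c th H). rewrite psi_spec by exact H. rewrite Tf0. reflexivity.
  - intros u. apply (psi_deriv l1 l2 c th H u).
Qed.

Lemma phi_sol : is_phi_sol l1 l2 c th (phi_of l1 l2 c th).
Proof.
  unfold phi_of. apply (epsilon_spec (inhabits (fun _ => 0)) (is_phi_sol l1 l2 c th)).
  exists (psi l1 l2 c th). apply psi_sol.
Qed.

Notation phi := (phi_of l1 l2 c th).

Lemma phi0 : phi 0 = 0.
Proof. apply phi_sol. Qed.

Lemma phi_deriv u : is_derive phi u (Fp l1 l2 c th (phi u)).
Proof. apply phi_sol. Qed.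

Lemma phi_cont u : continuous phi u.
Proof. apply (ex_derive_continuous phi). eexists; apply phi_deriv. Qed.

Lemma Tf_phi u : Tf l1 l2 c th (phi u) = u.
Proof.
  assert (Hd : forall x, is_derive (fun x => Tf l1 l2 c th (phi x) - x) x 0).
  { intros x.
    pose proof (is_derive_comp (Tf l1 l2 c th) phi x _ _ (Tf_deriv l1 l2 c th H (phi x)) (phi_deriv x)) as K.
    pose proof (is_derive_minus _ _ x _ _ K (is_derive_id x)) as K2.
    pose proof (Fp_pos l1 l2 c th (phi x) H).
    revert K2. match goal with |- is_derive _ _ ?v -> _ => replace v with 0 end. auto.
    unfold minus, plus, opp, scal, one; simpl. unfold mult; simpl. field. lra. }
  pose proof (deriv0_const _ u 0 Hd) as H0. cbv beta in H0. rewrite phi0, Tf0 in H0. lra.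
Qed.

Lemma phi_strict a b : a < b -> phi a < phi b.
Proof.
  intros Hab. destruct (Rle_lt_dec (phi b) (phi a)); auto.
  exfalso. destruct r.
  - apply (Tf_strict l1 l2 c th H) in H0. rewrite !Tf_phi in H0. lra.
  - apply (f_equal (Tf l1 l2 c th)) in H0. rewrite !Tf_phi in H0. lra.
Qed.

Lemma U_spec : U_of l1 l2 c th = Tf l1 l2 c th PI /\ phi (U_of l1 l2 c th) = PI.
Proof.
  assert (Ex : exists U, 0 < U /\ phi U = PI).
  { exists (Tf l1 l2 c th PI). split.
    - rewrite <- (Tf0 l1 l2 c th). apply (Tf_strict l1 l2 c th H). apply PI_RGT_0.
    - apply (Tf_inj l1 l2 c th H). apply Tf_phi. }
  pose proof (epsilon_spec (inhabits 0) (fun U => 0 < U /\ phi U = PI) Ex) as [_ E].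
  fold (U_of l1 l2 c th) in E. split; auto.
  rewrite <- E. rewrite Tf_phi. reflexivity.
Qed.

Lemma change_var (k : R -> R) u : (forall y, continuous k y) ->
  RInt (fun s => Fp l1 l2 c th (phi s) * k (phi s)) 0 u = RInt k 0 (phi u).
Proof.
  intros Hk. rewrite <- phi0 at 2.
  apply (RInt_comp (V:=R_CompleteNormedModule) k phi (fun s => Fp l1 l2 c th (phi s)) 0 u).
  - intros; apply Hk.
  - intros x _. split. apply phi_deriv.
    apply (continuous_comp phi (Fp l1 l2 c th)). apply phi_cont.
    apply (ex_derive_continuous (Fp l1 l2 c th)). apply Fp_derive; exact H.
Qed.

End S.


Section S.
Context (l1 l2 c th : R) (H : Hyp l1 l2 c).
Notation phi := (phi_of l1 l2 c th).
Notation F := (Fp l1 l2 c th).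
Notation B := (Bp l1 l2).
Notation D := (Dc c th).

Definition fk t := D * B t / F t.
Definition gk t := (c - F t) / (B t * F t).

Lemma fk_cont y : continuous fk y.
Proof.
  apply (ex_derive_continuous fk).
  pose proof (Fp_derive l1 l2 c th y H). pose proof (Bp_derive l1 l2 y).
  pose proof (Fp_pos l1 l2 c th y H). pose proof (B_pos l1 l2 c y H).
  unfold fk. auto_derive; repeat split; auto; try lra.
Qed.

Lemma gk_cont y : continuous gk y.
Proof.
  apply (ex_derive_continuous gk).
  pose proof (Fp_derive l1 l2 c th y H). pose proof (Bp_derive l1 l2 y).
  pose proof (Fp_pos l1 l2 c th y H). pose proof (B_pos l1 l2 c y H).
  unfold gk. auto_derive; repeat split; auto; try lra; nra.
Qed.

Lemma hk_cont y : continuous (hk l1 l2 c th) y.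
Proof. apply (ex_derive_continuous (hk l1 l2 c th)). apply hk_derive; exact H. Qed.

Lemma f_eq u : f_of l1 l2 c th u = RInt fk 0 (phi u).
Proof.
  rewrite <- (change_var l1 l2 c th H fk u fk_cont).
  unfold f_of. apply RInt_ext. intros x _. unfold fk, B_of, Bof.
  pose proof (Fp_pos l1 l2 c th (phi x) H). unfold Bp. match goal with |- ?a = ?b => change (@eq R a b) end. field. lra.
Qed.

Lemma G_eq u : G_of l1 l2 c th u = RInt gk 0 (phi u).
Proof.
  rewrite <- (change_var l1 l2 c th H gk u gk_cont).
  unfold G_of. apply RInt_ext. intros x _.
  pose proof (Fp_pos l1 l2 c th (phi x) H). pose proof (B_pos l1 l2 c (phi x) H).
  change ((c - F (phi x)) / B (phi x) = F (phi x) * ((c - F (phi x)) / (B (phi x) * F (phi x)))).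
  field. lra.
Qed.

Lemma Psi_eq u : D * f_of l1 l2 c th u + c * G_of l1 l2 c th u = RInt (hk l1 l2 c th) 0 (phi u).
Proof.
  rewrite f_eq, G_eq.
  rewrite <- RInt_lin by (apply ex_RInt_all; first [apply fk_cont | apply gk_cont]).
  apply RInt_ext. intros x _. unfold fk, gk, hk.
  pose proof (Fp_pos l1 l2 c th x H). pose proof (B_pos l1 l2 c x H). match goal with |- ?a = ?b => change (@eq R a b) end. field. lra.
Qed.

Lemma H_eq : H_of l1 l2 c th = RInt (hk l1 l2 c th) 0 PI.
Proof.
  unfold H_of. rewrite Psi_eq. destruct (U_spec l1 l2 c th H) as [_ E]. rewrite E. reflexivity.
Qed.

End S.


Lemma abs_div x y e m : Rabs x <= e -> 0 < m <= y -> Rabs (x / y) <= e / m.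
Proof.
  intros Hx Hm. unfold Rdiv. rewrite Rabs_mult. rewrite (Rabs_right (/ y)).
  2: left; apply Rinv_0_lt_compat; lra.
  apply Rmult_le_compat; auto. apply Rabs_pos. left; apply Rinv_0_lt_compat; lra.
  apply Rinv_le_contravar; lra.
Qed.

Lemma abs_mul x y ex ey : Rabs x <= ex -> Rabs y <= ey -> Rabs (x * y) <= ex * ey.
Proof.
  intros. rewrite Rabs_mult. apply Rmult_le_compat; auto; apply Rabs_pos.
Qed.

Lemma abs_add x y ex ey : Rabs x <= ex -> Rabs y <= ey -> Rabs (x + y) <= ex + ey.
Proof. intros. eapply Rle_trans. apply Rabs_triang. lra. Qed.

Lemma abs_sub x y ex ey : Rabs x <= ex -> Rabs y <= ey -> Rabs (x - y) <= ex + ey.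
Proof. intros. unfold Rminus. apply abs_add; auto. rewrite Rabs_Ropp; auto. Qed.

Lemma lip_gen (f df : R -> R) a b : (forall x, is_derive f x (df x)) -> (forall x, -1 <= df x <= 1) ->
  Rabs (f a - f b) <= Rabs (a - b).
Proof.
  intros Hd Hb. destruct (Rle_lt_dec a b).
  - pose proof (deriv_bounds f df (-1) 1 a b Hd Hb r).
    rewrite (Rabs_left1 (a - b)) by lra. apply Rabs_le. lra.
  - pose proof (deriv_bounds f df (-1) 1 b a Hd Hb (Rlt_le _ _ r)).
    rewrite (Rabs_right (a - b)) by lra. apply Rabs_le. lra.
Qed.

Lemma sin_lip a b : Rabs (sin a - sin b) <= Rabs (a - b).
Proof.
  apply (lip_gen sin cos). intros x. auto_derive; auto. ring. apply COS_bound.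
Qed.

Lemma cos_lip a b : Rabs (cos a - cos b) <= Rabs (a - b).
Proof.
  apply (lip_gen cos (fun x => - sin x)). intros x. auto_derive; auto. ring.
  intros x. pose proof (SIN_bound x). lra.
Qed.

Definition Lc l1 l2 c := (2 * l1^4 * (2 * c) + (l1^4 + c^2) * (2 * l1^2 + 2 * l1^4)) / (l2^2 * (c/2) * (c/2)).

Lemma hk_lip l1 l2 c t1 t2 x : Hyp l1 l2 c ->
  Rabs (hk l1 l2 c t1 x - hk l1 l2 c t2 x) <= Lc l1 l2 c * Rabs (t1 - t2).
Proof.
  intros H. pose proof H as [Hl Hc]. assert (1 <= c) by nra.
  pose proof (B_bounds l1 l2 x Hl) as [B1 B2].
  pose proof (F_bounds l1 l2 c t1 x H) as [[F11 F12] E1].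
  pose proof (F_bounds l1 l2 c t2 x H) as [[F21 F22] E2].
  set (del := Rabs (t1 - t2)). assert (0 <= del) by apply Rabs_pos.
  unfold hk, argp in *.
  set (B := Bp l1 l2 x) in *. set (F1 := Fp l1 l2 c t1 x) in *. set (F2 := Fp l1 l2 c t2 x) in *.
  assert (Ds : forall t, Dc c t ^ 2 = sin t ^ 2 / c ^ 2) by (intros; unfold Dc; field; lra).
  set (N1 := Dc c t1 ^ 2 * B ^ 2 + c ^ 2). set (N2 := Dc c t2 ^ 2 * B ^ 2 + c ^ 2).
  assert (Eq : Dc c t1 ^ 2 * B / F1 + c * (c - F1) / (B * F1) - (Dc c t2 ^ 2 * B / F2 + c * (c - F2) / (B * F2))
     = ((N1 - N2) * F2 + N2 * (F2 - F1)) / (B * F1 * F2)).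
  { unfold N1, N2. field. repeat split; intro; nra. }
  rewrite Eq.
  assert (EF : F2 - F1 = (2 * B * (cos t2 - cos t1) - B^2 * (Dc c t2 ^ 2 - Dc c t1 ^ 2)) / (F1 + F2)).
  { apply (Rmult_eq_reg_r (F1 + F2)); [|lra]. unfold Rdiv. rewrite Rmult_assoc, Rinv_l by lra.
    rewrite Rmult_1_r. replace ((F2 - F1) * (F1 + F2)) with (F2^2 - F1^2) by ring. rewrite E1, E2. ring. }
  assert (ED : Dc c t1 ^ 2 - Dc c t2 ^ 2 = (sin t1 - sin t2) * (sin t1 + sin t2) / c^2).
  { rewrite !Ds. field. lra. }
  assert (HD : Rabs (Dc c t1 ^ 2 - Dc c t2 ^ 2) <= 2 * del).
  { rewrite ED. replace (2 * del) with (del * 2 / 1) by field. apply abs_div; [|nra].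
    apply abs_mul. apply sin_lip. apply abs_add; apply Rabs_le; pose proof (SIN_bound t1); pose proof (SIN_bound t2); lra. }
  assert (HD' : Rabs (Dc c t2 ^ 2 - Dc c t1 ^ 2) <= 2 * del).
  { rewrite Rabs_minus_sym. exact HD. }
  assert (HN : Rabs (N1 - N2) <= l1^4 * (2 * del)).
  { replace (N1 - N2) with (B^2 * (Dc c t1 ^ 2 - Dc c t2 ^ 2)) by (unfold N1, N2; ring).
    apply abs_mul; auto. rewrite Rabs_right; nra. }
  assert (HFd : Rabs (F2 - F1) <= (2 * l1^2 * del + l1^4 * (2 * del)) / 1).
  { rewrite EF. apply abs_div; [|lra]. apply abs_sub.
    - replace (2 * l1 ^ 2 * del) with ((2 * l1^2) * del) by ring. apply abs_mul.
      rewrite Rabs_right; nra. rewrite Rabs_minus_sym. apply cos_lip.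
    - apply abs_mul; auto. rewrite Rabs_right; nra. }
  assert (HN2 : Rabs N2 <= l1^4 + c^2).
  { pose proof (D2_le c t2 H0). pose proof (D2_ge0 c t2). unfold N2.
    assert (Dc c t2 ^ 2 <= 1). { apply Rle_trans with (1 / c^2); auto. unfold Rdiv. rewrite Rmult_1_l.
      rewrite <- Rinv_1. apply Rinv_le_contravar; nra. }
    rewrite Rabs_right; nra. }
  unfold Lc. replace ((2 * l1 ^ 4 * (2 * c) + (l1 ^ 4 + c ^ 2) * (2 * l1 ^ 2 + 2 * l1 ^ 4)) /
    (l2 ^ 2 * (c / 2) * (c / 2)) * del) with
    ((l1^4 * (2 * del) * (2 * c) + (l1 ^ 4 + c ^ 2) * ((2 * l1^2 * del + l1^4 * (2 * del)) / 1)) /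
    (l2 ^ 2 * (c / 2) * (c / 2))) by (field; lra).
  apply abs_div.
  - apply abs_add; apply abs_mul; auto. rewrite Rabs_right; lra.
  - split. apply Rmult_lt_0_compat. nra. lra.
    apply Rmult_le_compat; try nra.
Qed.


Definition Hx l1 l2 c th := RInt (hk l1 l2 c th) 0 PI.

Section S.
Context (l1 l2 c : R) (H : Hyp l1 l2 c).

Lemma Hx_lip t1 t2 : Rabs (Hx l1 l2 c t1 - Hx l1 l2 c t2) <= PI * (Lc l1 l2 c * Rabs (t1 - t2)).
Proof.
  unfold Hx.
  assert (E : RInt (hk l1 l2 c t1) 0 PI - RInt (hk l1 l2 c t2) 0 PI =
              RInt (fun x => hk l1 l2 c t1 x - hk l1 l2 c t2 x) 0 PI).
  { symmetry. exact (RInt_minus (V:=R_CompleteNormedModule) (hk l1 l2 c t1) (hk l1 l2 c t2) 0 PI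
      (ex_RInt_all _ _ _ (hk_cont l1 l2 c t1 H)) (ex_RInt_all _ _ _ (hk_cont l1 l2 c t2 H))). }
  rewrite E. replace PI with (PI - 0) at 2 by ring.
  apply abs_RInt_le_const. pose proof PI_RGT_0; lra.
  apply (ex_RInt_minus (V:=R_CompleteNormedModule)); apply ex_RInt_all; apply hk_cont; exact H.
  intros; apply hk_lip; exact H.
Qed.

Lemma Lc_pos : 0 <= Lc l1 l2 c.
Proof.
  destruct H as [Hl Hc]. unfold Lc. apply Rle_mult_inv_pos.
  assert (0 <= l1^4) by nra. assert (0 <= l1^2) by nra. nra.
  assert (0 < l2^2) by nra. assert (0 <= l1^2) by nra. assert (0 < c/2) by lra. apply Rmult_lt_0_compat; [apply Rmult_lt_0_compat|]; lra.
Qed.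

Lemma Hx_cont : continuity (Hx l1 l2 c).
Proof.
  intros t e He. pose proof Lc_pos. pose proof PI_RGT_0.
  set (K := PI * Lc l1 l2 c + 1). assert (0 < K) by (unfold K; nra).
  exists (e / K). split. apply Rdiv_lt_0_compat; lra.
  intros y [_ Hy]. simpl in *. unfold R_dist in *.
  pose proof (Hx_lip y t).
  apply Rle_lt_trans with (PI * (Lc l1 l2 c * Rabs (y - t))); auto.
  apply Rle_lt_trans with (K * Rabs (y - t)).
  unfold K. pose proof (Rabs_pos (y - t)). nra.
  apply (Rmult_lt_compat_l K) in Hy; auto. replace (K * (e / K)) with e in Hy by (field; lra). lra.
Qed.

Lemma hk_pos_PI2 x : 0 < hk l1 l2 c (PI / 2) x.
Proof.
  pose proof H as [Hl Hc]. assert (1 <= c) by nra.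
  pose proof (B_bounds l1 l2 x Hl) as [B1 B2].
  pose proof (F_bounds l1 l2 c (PI/2) x H) as [[F1 F2] E].
  unfold hk, argp, Dc in *. rewrite sin_PI2 in *. rewrite cos_PI2 in E.
  set (B := Bp l1 l2 x) in *. set (F := Fp l1 l2 c (PI/2) x) in *.
  assert (0 < B) by nra.
  assert (EF : F^2 = c^2 - B^2 / c^2) by (rewrite E; field; lra).
  assert (0 < B^2 / c^2) by (apply Rdiv_lt_0_compat; nra).
  assert (F < c) by nra.
  assert (0 < (1 / c) ^ 2 * B / F) by (apply Rdiv_lt_0_compat; [apply Rmult_lt_0_compat; [apply pow_lt; apply Rdiv_lt_0_compat|];lra|lra]).
  assert (0 <= c * (c - F) / (B * F)) by (apply Rle_mult_inv_pos; nra).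
  lra.
Qed.

Lemma hk_neg_PI4 x : hk l1 l2 c (PI / 4) x < 0.
Proof.
  pose proof H as [Hl Hc]. assert (1 <= c) by nra.
  pose proof (B_bounds l1 l2 x Hl) as [B1 B2].
  pose proof (F_bounds l1 l2 c (PI/4) x H) as [[F1 F2] E].
  unfold hk, argp, Dc in *. rewrite sin_PI4 in *. rewrite cos_PI4 in E.
  set (B := Bp l1 l2 x) in *. set (F := Fp l1 l2 c (PI/4) x) in *.
  assert (0 < B) by nra.
  pose proof (sqrt_sqrt 2 ltac:(lra)) as S2. pose proof (sqrt_pos 2).
  assert (0 < sqrt 2) by nra. assert (sqrt 2 < 2) by nra.
  set (r := sqrt 2) in *.
  assert (Hk : 1 / r > 1 / 2). { apply Rmult_gt_reg_l with r; [lra|]. field_simplify; nra. }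
  set (kk := 1 / r) in *.
  assert (HD2 : (kk / c) ^ 2 = 1 / (2 * c^2)).
  { replace (2 * c^2) with (r * r * c^2) by (rewrite S2; ring). unfold kk. field. split; intro; nra. }
  rewrite HD2 in *.
  set (hv := 1 / (2 * c ^ 2) * B / F + c * (c - F) / (B * F)).
  assert (X : hv * (B * F * (c + F)) = 1 / (2 * c ^ 2) * B^2 * (c + F) + c * (c^2 - F^2)).
  { unfold hv. field. repeat split; intro; nra. }
  rewrite E in X.
  assert (B * (2 * c + F) <= l1^2 * (4 * c)) by nra.
  assert (c^2 > 2 * l1^2) by nra.
  assert (Y : 1 / (2 * c ^ 2) * B ^ 2 * (c + F) + c * (c ^ 2 - (c ^ 2 + 2 * kk * B - 1 / (2 * c ^ 2) * B ^ 2))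
     = B * (B * (2 * c + F)) / (2 * c^2) - 2 * c * kk * B) by (field; intro; nra).
  rewrite Y in X.
  assert (B * (B * (2 * c + F)) / (2 * c^2) <= B * (l1^2 * (4*c)) / (2 * c^2)).
  { unfold Rdiv. apply Rmult_le_compat_r. left; apply Rinv_0_lt_compat; nra. nra. }
  assert (B * (l1 ^ 2 * (4 * c)) / (2 * c ^ 2) < c * B).
  { apply Rmult_lt_reg_r with (2 * c^2); [nra|]. replace (B * (l1 ^ 2 * (4 * c)) / (2 * c ^ 2) * (2 * c ^ 2)) with (B * (l1 ^ 2 * (4 * c))) by (field; intro; nra). assert (0 < c * (2*c^2 - 4*l1^2)) by (apply Rmult_lt_0_compat; nra). assert (0 < B * (c * (2*c^2 - 4*l1^2))) by (apply Rmult_lt_0_compat; nra). nra. }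
  assert (0 < (kk - 1/2) * (c * B)) by (apply Rmult_lt_0_compat; nra). assert (hv * (B * F * (c + F)) < 0) by lra.
  assert (0 <= l1^2) by nra. assert (0 < B * F * (c + F)) by (apply Rmult_lt_0_compat; [apply Rmult_lt_0_compat|]; lra).
  destruct (Rlt_or_le hv 0) as [Hv|Hv]; [exact Hv|]. assert (0 <= hv * (B * F * (c + F))) by (apply Rmult_le_pos; lra). lra.
Qed.

End S.


Section S.
Context (l1 l2 c : R) (H : Hyp l1 l2 c).

Lemma Hx_PI2 : 0 < Hx l1 l2 c (PI / 2).
Proof.
  unfold Hx. apply RInt_gt_0. apply PI_RGT_0.
  intros; apply hk_pos_PI2; exact H.
  intros; apply hk_cont; exact H.
Qed.

Lemma Hx_PI4 : Hx l1 l2 c (PI / 4) < 0.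
Proof.
  unfold Hx. replace 0 with (RInt (fun _ => 0) 0 PI) at 2.
  - apply RInt_lt. apply PI_RGT_0.
    intros; apply continuous_const.
    intros; apply hk_cont; exact H.
    intros; apply hk_neg_PI4; exact H.
  - rewrite RInt_const. unfold scal; simpl. unfold mult; simpl. ring.
Qed.

Lemma theta_exists : exists th, (0 < th < PI / 2 /\ th < theta_plus l1 c /\ H_of l1 l2 c th = 0).
Proof.
  destruct (IVT (Hx l1 l2 c) (PI/4) (PI/2) (Hx_cont l1 l2 c H)) as [z [Hz Ez]].
  - pose proof PI_RGT_0. lra.
  - apply Hx_PI4.
  - apply Hx_PI2.
  - exists z. pose proof PI_RGT_0.
    assert (z <> PI/4). { intro; subst. pose proof Hx_PI4. lra. }
    assert (z <> PI/2). { intro; subst. pose proof Hx_PI2. lra. }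
    split; [lra|split].
    + unfold theta_plus. destruct (Rlt_dec (sqrt 2 * l1) c). lra.
      exfalso. apply n. destruct H as [Hl Hc].
      pose proof (sqrt_sqrt 2 ltac:(lra)) as S2. pose proof (sqrt_pos 2).
      assert (sqrt 2 < 2) by nra. nra.
    + rewrite (H_eq l1 l2 c z H). exact Ez.
Qed.

Lemma theta_spec : let th := theta_tilde l1 l2 c in
  0 < th < PI / 2 /\ th < theta_plus l1 c /\ H_of l1 l2 c th = 0.
Proof.
  unfold theta_tilde.
  apply (epsilon_spec (inhabits 0) (fun th => 0 < th < PI / 2 /\ th < theta_plus l1 c /\ H_of l1 l2 c th = 0)).
  apply theta_exists.
Qed.

End S.


Lemma Bp_shift l1 l2 x : Bp l1 l2 (x + PI) = Bp l1 l2 x.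
Proof. unfold Bp. rewrite neg_cos, neg_sin. ring. Qed.

Lemma hk_shift l1 l2 c th x : hk l1 l2 c th (x + PI) = hk l1 l2 c th x.
Proof. unfold hk, Fp, argp. rewrite !Bp_shift. reflexivity. Qed.

Section S.
Context (l1 l2 c th : R) (H : Hyp l1 l2 c) (Hth : 0 < th < PI / 2) (H0 : Hx l1 l2 c th = 0).

Definition Psi x := RInt (hk l1 l2 c th) 0 x.

Lemma Psi_deriv x : is_derive Psi x (hk l1 l2 c th x).
Proof. unfold Psi. apply (RInt_deriv (hk l1 l2 c th)). intros; apply hk_cont; exact H. Qed.

Lemma Psi_per x : Psi (x + PI) = Psi x.
Proof.
  assert (Hd : forall y, is_derive (fun y => Psi (y + PI) - Psi y) y 0).
  { intros y.
    assert (K1 : is_derive (fun y => y + PI) y 1).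
    { auto_derive; auto; ring. }
    pose proof (is_derive_comp Psi (fun y => y + PI) y _ _ (Psi_deriv (y + PI)) K1) as K.
    pose proof (is_derive_minus _ _ y _ _ K (Psi_deriv y)) as K2.
    revert K2. match goal with |- is_derive _ _ ?v -> _ => replace v with 0 end. auto.
    unfold minus, plus, opp, scal; simpl. unfold mult; simpl. rewrite hk_shift. ring. }
  pose proof (deriv0_const _ x 0 Hd) as E. cbv beta in E.
  rewrite Rplus_0_l in E. assert (P0 : Psi 0 = 0) by (unfold Psi; rewrite RInt_point; reflexivity). rewrite P0 in E.
  change (Psi PI) with (Hx l1 l2 c th) in E. rewrite H0 in E. simpl in E. lra.
Qed.

Lemma Psi_per_n (n : nat) x : Psi (x + INR n * PI) = Psi x.
Proof.
  induction n. simpl. f_equal. ring.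
  rewrite S_INR. replace (x + (INR n + 1) * PI) with ((x + INR n * PI) + PI) by ring.
  rewrite Psi_per. exact IHn.
Qed.

Lemma Psi_reduce x : exists y, 0 <= y <= PI /\ Psi x = Psi y.
Proof.
  pose proof PI_RGT_0.
  destruct (archimed (x / PI)) as [a1 a2].
  set (z := (up (x / PI) - 1)%Z).
  assert (Hz1 : IZR z <= x / PI) by (unfold z; rewrite minus_IZR; simpl; lra).
  assert (Hz2 : x / PI < IZR z + 1) by (unfold z; rewrite minus_IZR; simpl; lra).
  set (y := x - IZR z * PI). exists y.
  assert (IZR z * PI <= x). { apply (Rmult_le_compat_r PI) in Hz1; [|lra].
    replace (x / PI * PI) with x in Hz1 by (field; lra). exact Hz1. }
  assert (x < (IZR z + 1) * PI). { apply (Rmult_lt_compat_r PI) in Hz2; [|lra].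
    replace (x / PI * PI) with x in Hz2 by (field; lra). exact Hz2. }
  split. unfold y. lra.
  destruct (Z_le_gt_dec 0 z) as [Hp|Hn].
  - rewrite <- (Psi_per_n (Z.to_nat z) y). f_equal. unfold y.
    rewrite INR_IZR_INZ, Z2Nat.id by exact Hp. ring.
  - rewrite <- (Psi_per_n (Z.to_nat (- z)) x). unfold y. f_equal.
    rewrite INR_IZR_INZ, Z2Nat.id by lia. rewrite opp_IZR. ring.
Qed.

Definition Pf x := (Dc c th)^2 * Bp l1 l2 x / Fp l1 l2 c th x
  + c * (Dc c th)^2 * Bp l1 l2 x / (Fp l1 l2 c th x * (c + Fp l1 l2 c th x)).
Definition Qf x := 2 * c * cos th / (Fp l1 l2 c th x * (c + Fp l1 l2 c th x)).

Lemma hk_PQ x : hk l1 l2 c th x = Pf x - Qf x.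
Proof.
  pose proof (F_bounds l1 l2 c th x H) as [[F1 F2] E]. pose proof (B_pos l1 l2 c x H).
  pose proof H as [Hl Hc]. assert (0 <= l1^2) by nra.
  unfold hk, Pf, Qf, argp in *. set (F := Fp l1 l2 c th x) in *. set (B := Bp l1 l2 x) in *.
  apply (Rmult_eq_reg_r (B * F * (c + F))). 2: { apply Rgt_not_eq. apply Rmult_lt_0_compat; [apply Rmult_lt_0_compat|]; lra. }
  set (D2 := Dc c th ^ 2) in *.
  assert (X1 : (D2 * B / F + c * (c - F) / (B * F)) * (B * F * (c + F)) = D2 * B^2 * (c + F) + c * (c^2 - F^2))
    by (field; split; lra).
  assert (X2 : (D2 * B / F + c * D2 * B / (F * (c + F)) - 2 * c * cos th / (F * (c + F))) * (B * F * (c + F))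
     = D2 * B^2 * (c + F) + c * D2 * B^2 - 2 * c * cos th * B) by (field; split; lra).
  rewrite X1, X2, E. ring.
Qed.

Lemma Pf_cont y : continuous Pf y.
Proof.
  apply (ex_derive_continuous Pf).
  pose proof (Fp_derive l1 l2 c th y H). pose proof (Bp_derive l1 l2 y).
  pose proof (Fp_pos l1 l2 c th y H). pose proof H as [Hl Hc]. assert (0 <= l1^2) by nra.
  unfold Pf. auto_derive; repeat split; auto; try lra; apply Rgt_not_eq; apply Rmult_lt_0_compat; lra.
Qed.

Lemma Qf_cont y : continuous Qf y.
Proof.
  apply (ex_derive_continuous Qf).
  pose proof (Fp_derive l1 l2 c th y H).
  pose proof (Fp_pos l1 l2 c th y H). pose proof H as [Hl Hc]. assert (0 <= l1^2) by nra.
  unfold Qf. auto_derive; repeat split; auto; try lra; apply Rgt_not_eq; apply Rmult_lt_0_compat; lra.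
Qed.

Lemma cos_th_pos : 0 <= cos th.
Proof. apply cos_ge_0; lra. Qed.

Lemma Pf_nonneg y : 0 <= Pf y.
Proof.
  pose proof (Fp_pos l1 l2 c th y H). pose proof (B_pos l1 l2 c y H).
  pose proof H as [Hl Hc]. assert (0 <= l1^2) by nra.
  unfold Pf. pose proof (D2_ge0 c th).
  apply Rplus_le_le_0_compat; apply Rle_mult_inv_pos; try nra. all: try (apply Rmult_le_pos; [apply Rmult_le_pos|]; lra). all: try (apply Rmult_lt_0_compat; lra).
Qed.

Lemma Qf_nonneg y : 0 <= Qf y.
Proof.
  pose proof (Fp_pos l1 l2 c th y H). pose proof cos_th_pos.
  pose proof H as [Hl Hc]. assert (0 <= l1^2) by nra.
  unfold Qf. apply Rle_mult_inv_pos. nra. apply Rmult_lt_0_compat; lra.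
Qed.

Lemma Pf_le y : Pf y <= 4 * (Dc c th)^2 * l1^2 / c.
Proof.
  pose proof H as [Hl Hc]. assert (0 <= l1^2) by nra. assert (1 <= c) by nra.
  pose proof (F_bounds l1 l2 c th y H) as [[F1 F2] _]. pose proof (B_bounds l1 l2 y Hl) as [B1 B2].
  pose proof (D2_ge0 c th). unfold Pf.
  set (F := Fp l1 l2 c th y) in *. set (B := Bp l1 l2 y) in *. set (D2 := Dc c th ^ 2) in *.
  assert (T1 : D2 * B / F <= D2 * l1^2 * (2 / c)).
  { assert (B / F <= l1^2 * (2/c)).
    { assert (0 < B) by nra. unfold Rdiv. apply Rmult_le_compat; try lra. left; apply Rinv_0_lt_compat; lra.
      replace (2 * / c) with (/ (c/2)) by (field; lra). apply Rinv_le_contravar; lra. }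
    replace (D2 * B / F) with (D2 * (B / F)) by (unfold Rdiv; ring).
    replace (D2 * l1^2 * (2/c)) with (D2 * (l1^2 * (2/c))) by ring.
    apply Rmult_le_compat_l; auto. }
  assert (T2 : c * D2 * B / (F * (c + F)) <= D2 * l1^2 * (2 / c)).
  { replace (c * D2 * B / (F * (c + F))) with (D2 * B * (c / (F * (c + F)))) by (field; split; lra).
    apply Rmult_le_compat; try nra.
    apply Rle_mult_inv_pos; try lra. apply Rmult_lt_0_compat; lra.
    apply Rmult_le_reg_r with (F * (c + F)). apply Rmult_lt_0_compat; lra.
    replace (c / (F * (c + F)) * (F * (c + F))) with c by (field; split; lra).
    replace (2 / c * (F * (c + F))) with (2 * F * (c + F) / c) by (field; lra).
    apply Rmult_le_reg_r with c; [lra|]. replace (2 * F * (c + F) / c * c) with (2 * F * (c + F)) by (field; lra).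
    nra. }
  replace (4 * D2 * l1 ^ 2 / c) with (D2 * l1 ^ 2 * (2 / c) + D2 * l1 ^ 2 * (2 / c)) by (field; lra).
  lra.
Qed.

Lemma RInt_mono_pos (g : R -> R) y : (forall x, continuous g x) -> (forall x, 0 <= g x) -> 0 <= y <= PI ->
  0 <= RInt g 0 y <= RInt g 0 PI.
Proof.
  intros Hc Hp Hy. split.
  - apply RInt_ge_0; try lra. apply ex_RInt_all; auto. intros; auto.
  - assert (E : RInt g 0 y + RInt g y PI = RInt g 0 PI).
    { exact (RInt_Chasles (V:=R_CompleteNormedModule) g 0 y PI (ex_RInt_all _ _ _ Hc) (ex_RInt_all _ _ _ Hc)). }
    assert (0 <= RInt g y PI). { apply RInt_ge_0; try lra. apply ex_RInt_all; auto. intros; auto. }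
    lra.
Qed.

Lemma Psi_PQ y : Psi y = RInt Pf 0 y - RInt Qf 0 y.
Proof.
  unfold Psi. assert (E : RInt (fun x => Pf x - Qf x) 0 y = RInt Pf 0 y - RInt Qf 0 y)
    by exact (RInt_minus (V:=R_CompleteNormedModule) Pf Qf 0 y (ex_RInt_all _ _ _ Pf_cont) (ex_RInt_all _ _ _ Qf_cont)).
  rewrite <- E. apply RInt_ext. intros x _. rewrite hk_PQ. reflexivity.
Qed.

Lemma Psi_bound x : Rabs (Psi x) <= PI * (4 * (Dc c th)^2 * l1^2 / c).
Proof.
  destruct (Psi_reduce x) as [y [Hy E]]. rewrite E.
  pose proof (RInt_mono_pos Pf y Pf_cont Pf_nonneg Hy).
  pose proof (RInt_mono_pos Qf y Qf_cont Qf_nonneg Hy).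
  assert (EPI : RInt Pf 0 PI = RInt Qf 0 PI).
  { pose proof (Psi_PQ PI). unfold Psi in H3. fold (Hx l1 l2 c th) in H3. rewrite H0 in H3. lra. }
  assert (RInt Pf 0 PI <= (PI - 0) * (4 * (Dc c th)^2 * l1^2 / c)).
  { eapply Rle_trans. apply Rle_abs. apply abs_RInt_le_const. pose proof PI_RGT_0; lra.
    apply ex_RInt_all, Pf_cont. intros. rewrite Rabs_right. apply Pf_le. apply Rle_ge, Pf_nonneg. }
  rewrite Psi_PQ. apply Rabs_le. lra.
Qed.

End S.


Lemma exp_le1 a : a <= 1 -> 0 < exp a <= 3.
Proof.
  intros Ha. split. apply exp_pos. destruct Ha.
  - apply exp_increasing in H. pose proof exp_le_3. lra.
  - subst. apply exp_le_3.
Qed.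

Lemma cosh_sinh_bound a : - 1 <= a <= 1 -> Rabs (cosh a) <= 3 /\ Rabs (sinh a) <= 3.
Proof.
  intros Ha. pose proof (exp_le1 a ltac:(lra)). pose proof (exp_le1 (-a) ltac:(lra)).
  unfold cosh, sinh. split; apply Rabs_le; lra.
Qed.

Lemma abs4 a b t m al be mu : Rabs a <= al -> Rabs b <= be -> Rabs t <= 1 -> Rabs m <= mu ->
  Rabs (a * b * t * m) <= al * be * mu.
Proof.
  intros. replace (al * be * mu) with (al * be * 1 * mu) by ring.
  repeat apply abs_mul; auto.
Qed.

Lemma xy_bound l1 l2 c D ph cp fp B ch sh :
  0 < l2 <= l1 -> 1 <= c -> 0 < D -> D * c <= 1 -> l2 ^ 2 <= B ->
  Rabs fp <= l1 ^ 2 / c -> Rabs cp <= 3 * l1 ^ 2 / c -> Rabs ch <= 3 -> Rabs sh <= 3 ->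
  let K := - / ((c ^ 2 + l1 ^ 2 * l2 ^ 2 * D ^ 2) * B) in
  Rabs (K * (/ l1 * fp * cos ph * (c * ch) - / l1 * cp * sin ph * (c * sh)
       - / l2 * cp * cos ph * (l1 * l2 * D * ch) - / l2 * fp * sin ph * (l1 * l2 * D * sh)))
    <= (12 * l1 + 12 * l1 ^ 3 + 12 * l1 ^ 2 / l2 + 12 * l1 ^ 2 * l2) / l2 ^ 2 / c ^ 2 /\
  Rabs (K * (/ l1 * fp * cos ph * (l1 * l2 * D * sh) - / l1 * cp * sin ph * (l1 * l2 * D * ch)
       + / l2 * cp * cos ph * (c * sh) + / l2 * fp * sin ph * (c * ch)))
    <= (12 * l1 + 12 * l1 ^ 3 + 12 * l1 ^ 2 / l2 + 12 * l1 ^ 2 * l2) / l2 ^ 2 / c ^ 2.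
Proof.
  intros Hl Hc HD HDc HB Hf Hcp Hch Hsh K.
  assert (Hl1 : Rabs (/ l1) <= / l1) by (rewrite Rabs_right; [lra| left; apply Rinv_0_lt_compat; lra]).
  assert (Hl2 : Rabs (/ l2) <= / l2) by (rewrite Rabs_right; [lra| left; apply Rinv_0_lt_compat; lra]).
  assert (Cc : forall z, Rabs z <= 3 -> Rabs (c * z) <= c * 3).
  { intros z Hz. apply abs_mul; auto. rewrite Rabs_right; lra. }
  assert (CD : forall z, Rabs z <= 3 -> Rabs (l1 * l2 * D * z) <= l1 * l2 * (1 / c) * 3).
  { intros z Hz. apply abs_mul; auto. rewrite Rabs_right.
    2: { apply Rle_ge. apply Rmult_le_pos; [|lra]. apply Rmult_le_pos; lra. }
    apply Rmult_le_compat_l. apply Rmult_le_pos; lra.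
    apply Rmult_le_reg_r with c; [lra|]. unfold Rdiv. rewrite Rmult_1_l, Rinv_l by lra. lra. }
  pose proof (COS_bound ph). pose proof (SIN_bound ph).
  assert (Hco : Rabs (cos ph) <= 1) by (apply Rabs_le; lra).
  assert (Hsi : Rabs (sin ph) <= 1) by (apply Rabs_le; lra).
  assert (HK : Rabs K <= / (c^2 * l2^2)).
  { unfold K. rewrite Rabs_Ropp. rewrite Rabs_right.
    2: { left. apply Rinv_0_lt_compat. apply Rmult_lt_0_compat; nra. }
    apply Rinv_le_contravar. apply Rmult_lt_0_compat; nra. assert (0 <= l1 ^ 2 * l2 ^ 2 * D ^ 2) by (apply Rmult_le_pos; [apply Rmult_le_pos|]; nra). apply Rmult_le_compat; nra. }
  set (W := 12 * l1 + 12 * l1 ^ 3 + 12 * l1 ^ 2 / l2 + 12 * l1 ^ 2 * l2).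
  assert (Pl : 0 <= 12 * l1 ^ 2 / l2 /\ 0 <= 12 * l1 ^ 2 * l2 /\ 0 <= 12 * l1 /\ 0 <= 12 * l1 ^ 3).
  { repeat split; try (apply Rle_mult_inv_pos); nra. }
  assert (Ic : / c ^ 2 <= 1) by (rewrite <- Rinv_1; apply Rinv_le_contravar; nra).
  assert (Ic0 : 0 < / c ^ 2) by (apply Rinv_0_lt_compat; nra).
  assert (Fin : forall S, 0 <= S -> S <= W -> Rabs K * S <= W / l2 ^ 2 / c ^ 2).
  { intros S HS0 HS. replace (W / l2 ^ 2 / c ^ 2) with (/ (c ^ 2 * l2 ^ 2) * W) by (field; split; lra).
    apply Rmult_le_compat; auto. apply Rabs_pos. }
  split.
  - assert (T : Rabs (/ l1 * fp * cos ph * (c * ch) - / l1 * cp * sin ph * (c * sh)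
       - / l2 * cp * cos ph * (l1 * l2 * D * ch) - / l2 * fp * sin ph * (l1 * l2 * D * sh)) <=
       / l1 * (l1 ^ 2 / c) * (c * 3) + / l1 * (3 * l1 ^ 2 / c) * (c * 3)
     + / l2 * (3 * l1 ^ 2 / c) * (l1 * l2 * (1 / c) * 3) + / l2 * (l1 ^ 2 / c) * (l1 * l2 * (1 / c) * 3)).
    { apply abs_sub; [apply abs_sub; [apply abs_sub|]|].
      all: try (apply abs4; auto; apply Cc; auto).
      all: try (apply abs4; auto; apply CD; auto). }
    eapply Rle_trans. rewrite Rabs_mult. apply Rmult_le_compat_l. apply Rabs_pos. exact T.
    apply Fin. eapply Rle_trans; [apply Rabs_pos|exact T].
    replace (/ l1 * (l1 ^ 2 / c) * (c * 3) + / l1 * (3 * l1 ^ 2 / c) * (c * 3)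
     + / l2 * (3 * l1 ^ 2 / c) * (l1 * l2 * (1 / c) * 3) + / l2 * (l1 ^ 2 / c) * (l1 * l2 * (1 / c) * 3))
     with (12 * l1 + 12 * l1 ^ 3 * / c ^ 2) by (field; repeat split; lra).
    unfold W. assert (12 * l1 ^ 3 * / c ^ 2 <= 12 * l1 ^ 3) by nra. lra.
  - assert (T : Rabs (/ l1 * fp * cos ph * (l1 * l2 * D * sh) - / l1 * cp * sin ph * (l1 * l2 * D * ch)
       + / l2 * cp * cos ph * (c * sh) + / l2 * fp * sin ph * (c * ch)) <= 
       / l1 * (l1 ^ 2 / c) * (l1 * l2 * (1 / c) * 3) + / l1 * (3 * l1 ^ 2 / c) * (l1 * l2 * (1 / c) * 3)
       + / l2 * (3 * l1 ^ 2 / c) * (c * 3) + / l2 * (l1 ^ 2 / c) * (c * 3)).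
    { apply abs_add; [apply abs_add; [apply abs_sub|]|].
      all: try (apply abs4; auto; apply Cc; auto).
      all: try (apply abs4; auto; apply CD; auto). }
    eapply Rle_trans. rewrite Rabs_mult. apply Rmult_le_compat_l. apply Rabs_pos. exact T.
    apply Fin. eapply Rle_trans; [apply Rabs_pos|exact T].
    replace (/ l1 * (l1 ^ 2 / c) * (l1 * l2 * (1 / c) * 3) + / l1 * (3 * l1 ^ 2 / c) * (l1 * l2 * (1 / c) * 3)
       + / l2 * (3 * l1 ^ 2 / c) * (c * 3) + / l2 * (l1 ^ 2 / c) * (c * 3))
      with (12 * l1 ^ 2 * l2 * / c ^ 2 + 12 * l1 ^ 2 / l2) by (field; repeat split; lra).
    unfold W. assert (12 * l1 ^ 2 * l2 * / c ^ 2 <= 12 * l1 ^ 2 * l2) by nra. lra.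
Qed.


Lemma cp_bound l1 l2 c th x : Hyp l1 l2 c -> Rabs (c - Fp l1 l2 c th x) <= 3 * l1 ^ 2 / c.
Proof.
  intros H. pose proof H as [Hl Hc]. assert (0 <= l1^2) by nra. assert (1 <= c) by nra.
  pose proof (F_bounds l1 l2 c th x H) as [[F1 F2] E]. pose proof (B_bounds l1 l2 x Hl) as [B1 B2].
  pose proof (D2_le c th H1). pose proof (D2_ge0 c th). pose proof (COS_bound th).
  unfold argp in E. set (F := Fp l1 l2 c th x) in *. set (B := Bp l1 l2 x) in *. set (D2 := Dc c th ^ 2) in *.
  assert (EF : c - F = (D2 * B^2 - 2 * cos th * B) / (c + F)).
  { field_simplify_eq; [|lra]. replace (c * c) with (c^2) by ring. replace (F * F) with (F^2) by ring. rewrite E. ring. }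
  rewrite EF. apply abs_div; [|lra].
  assert (0 <= B) by nra.
  assert (D2 * B^2 <= l1^2).
  { assert (Dc2 : D2 * c^2 <= 1).
    { pose proof (Rmult_le_compat_r (c^2) _ _ ltac:(nra) H2) as H2'. replace (1 / c ^ 2 * c ^ 2) with 1 in H2' by (field; apply Rgt_not_eq; lra). lra. }
    apply Rmult_le_reg_r with (c^2). nra.
    assert (B^2 <= l1^4) by nra. assert (l1^2 <= c^2) by nra. assert (l1^4 <= l1^2 * c^2) by (replace (l1^4) with (l1^2 * l1^2) by ring; apply Rmult_le_compat_l; lra).
    assert (D2 * B ^ 2 * c ^ 2 = (D2 * c^2) * B^2) by ring.
    assert ((D2 * c^2) * B^2 <= 1 * B^2) by (apply Rmult_le_compat_r; nra). nra. }
  assert (0 <= D2 * B^2) by nra.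
  assert (-1 * B <= cos th * B <= B) by nra.
  apply Rabs_le. lra.
Qed.

Lemma sqrt_sum_le a b : sqrt (a ^ 2 + b ^ 2) <= Rabs a + Rabs b.
Proof.
  rewrite <- (sqrt_pow2 (Rabs a + Rabs b)) by (pose proof (Rabs_pos a); pose proof (Rabs_pos b); lra).
  apply sqrt_le_1_alt. rewrite <- (pow2_abs a), <- (pow2_abs b).
  pose proof (Rabs_pos a); pose proof (Rabs_pos b). nra.
Qed.

Theorem proposition6p2 (l1 l2 : R)
  (Hl : (l1 > l2 /\ l2 > 0) \/ (l1 = 1 /\ l2 = 1)) :
  forall eps : R, 0 < eps ->
  exists C : R, forall c : R, C < c ->
    forall u v : R, cat_x3 l1 l2 c u v = 0 ->
      sqrt (cat_x1 l1 l2 c u v ^ 2 + cat_x2 l1 l2 c u v ^ 2) <= eps.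
Proof.
  intros eps Heps.
  assert (Hl' : 0 < l2 <= l1) by (destruct Hl; lra).
  set (W := 12 * l1 + 12 * l1 ^ 3 + 12 * l1 ^ 2 / l2 + 12 * l1 ^ 2 * l2).
  assert (HW : 0 <= W).
  { unfold W. assert (0 <= 12 * l1 ^ 2 / l2) by (apply Rle_mult_inv_pos; nra).
    assert (0 <= l1^3) by (apply pow_le; lra). assert (0 <= l1^2 * l2) by nra. lra. }
  assert (HW2 : 0 <= 2 * W / l2 ^ 2 / eps).
  { apply Rle_mult_inv_pos; [|lra]. apply Rle_mult_inv_pos; nra. }
  exists (4 + 4 * l1 ^ 2 + 2 * W / l2 ^ 2 / eps).
  intros c Hc u v Hx3.
  assert (H : Hyp l1 l2 c) by (split; [exact Hl'|lra]).
  assert (c1 : 1 <= c) by nra.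
  destruct (theta_spec l1 l2 c H) as [Hth [_ HH]].
  set (th := theta_tilde l1 l2 c) in *.
  rewrite (H_eq l1 l2 c th H) in HH. fold (Hx l1 l2 c th) in HH.
  assert (Hs : 0 < sin th <= 1).
  { split. apply sin_gt_0; pose proof PI_RGT_0; lra. pose proof (SIN_bound th); lra. }
  set (D := Dc c th).
  assert (HD : 0 < D) by (unfold D, Dc; apply Rdiv_lt_0_compat; lra).
  assert (HDc : D * c <= 1) by (unfold D, Dc; replace (sin th / c * c) with (sin th) by (field; lra); lra).
  set (phu := phi_of l1 l2 c th u).
  pose proof (B_bounds l1 l2 phu Hl') as [B1 B2].
  assert (Dv : D * v = G_of l1 l2 c th u).
  { unfold cat_x3 in Hx3. cbv zeta in Hx3. fold th D in Hx3.
    assert (l1 * l2 * (G_of l1 l2 c th u - D * v) = 0) by lra.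
    apply Rmult_integral in H0. destruct H0. nra. lra. }
  set (A := f_of l1 l2 c th u + c * v).
  assert (HA : D * A = RInt (hk l1 l2 c th) 0 phu).
  { unfold A, phu. rewrite <- (Psi_eq l1 l2 c th H u). fold D. rewrite <- Dv. ring. }
  assert (HAb : -1 <= A <= 1).
  { pose proof (Psi_bound l1 l2 c th H (conj (proj1 Hth) (proj2 Hth)) HH phu) as Pb.
    unfold Psi in Pb. rewrite <- HA in Pb. fold D in Pb.
    rewrite Rabs_mult, (Rabs_right D) in Pb by lra.
    assert (Rabs A <= PI * (4 * D * l1 ^ 2 / c)).
    { apply Rmult_le_reg_l with D; auto. replace (D * (PI * (4 * D * l1 ^ 2 / c))) with (PI * (4 * D ^ 2 * l1 ^ 2 / c)) by (field; lra). exact Pb. }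
    assert (PI * (4 * D * l1 ^ 2 / c) <= 1).
    { pose proof PI_4. pose proof PI_RGT_0. assert (0 <= l1^2) by nra.
      assert (D <= 1 / c) by (apply Rmult_le_reg_r with c; [lra|]; replace (1 / c * c) with 1 by (field; lra); lra).
      assert (4 * D * l1^2 / c <= 4 * l1^2 / c^2).
      { unfold Rdiv. replace (4 * l1 ^ 2 * / c ^ 2) with (4 * l1^2 * (1 / c) * / c) by (field; lra).
        apply Rmult_le_compat_r. left; apply Rinv_0_lt_compat; lra. nra. }
      assert (4 * l1^2 / c^2 <= 1/4).
      { apply Rmult_le_reg_r with (c^2). nra. replace (4 * l1 ^ 2 / c ^ 2 * c ^ 2) with (4 * l1^2) by (field; lra). nra. }
      assert (0 <= 4 * D * l1 ^ 2 / c) by (apply Rle_mult_inv_pos; nra).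
      nra. }
    apply Rabs_le_between. lra. }
  pose proof (cosh_sinh_bound A HAb) as [Hch Hsh].
  assert (Hfp : Rabs (fd_of l1 l2 c th u) <= l1 ^ 2 / c).
  { unfold fd_of. fold D. change (B_of l1 l2 c th u) with (Bp l1 l2 phu).
    rewrite Rabs_mult, !Rabs_right by nra.
    assert (D <= 1 / c) by (apply Rmult_le_reg_r with c; [lra|]; replace (1 / c * c) with 1 by (field; lra); lra).
    replace (l1 ^ 2 / c) with (1 / c * l1^2) by (field; lra). apply Rmult_le_compat; nra. }
  assert (Hcp : Rabs (c - phid_of l1 l2 c th u) <= 3 * l1 ^ 2 / c).
  { change (phid_of l1 l2 c th u) with (Fp l1 l2 c th phu). apply cp_bound; exact H. }
  assert (HBl : l2 ^ 2 <= B_of l1 l2 c th u) by (change (B_of l1 l2 c th u) with (Bp l1 l2 phu); lra).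
  pose proof (xy_bound l1 l2 c D phu (c - phid_of l1 l2 c th u) (fd_of l1 l2 c th u) (B_of l1 l2 c th u)
     (cosh A) (sinh A) Hl' c1 HD HDc HBl Hfp Hcp Hch Hsh) as [X1 X2].
  cbv zeta in X1, X2.
  assert (E1 : cat_x1 l1 l2 c u v = - / ((c ^ 2 + l1 ^ 2 * l2 ^ 2 * D ^ 2) * B_of l1 l2 c th u) *
     (/ l1 * fd_of l1 l2 c th u * cos phu * (c * cosh A) - / l1 * (c - phid_of l1 l2 c th u) * sin phu * (c * sinh A) -
      / l2 * (c - phid_of l1 l2 c th u) * cos phu * (l1 * l2 * D * cosh A) -
      / l2 * fd_of l1 l2 c th u * sin phu * (l1 * l2 * D * sinh A))).
  { unfold cat_x1. cbv zeta. rewrite Hx3, cos_0, sin_0. fold th D phu A. ring. }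
  assert (E2 : cat_x2 l1 l2 c u v = - / ((c ^ 2 + l1 ^ 2 * l2 ^ 2 * D ^ 2) * B_of l1 l2 c th u) *
     (/ l1 * fd_of l1 l2 c th u * cos phu * (l1 * l2 * D * sinh A) -
      / l1 * (c - phid_of l1 l2 c th u) * sin phu * (l1 * l2 * D * cosh A) +
      / l2 * (c - phid_of l1 l2 c th u) * cos phu * (c * sinh A) +
      / l2 * fd_of l1 l2 c th u * sin phu * (c * cosh A))).
  { unfold cat_x2. cbv zeta. rewrite Hx3, cos_0, sin_0. fold th D phu A. ring. }
  rewrite E1, E2. eapply Rle_trans. apply sqrt_sum_le.
  fold W in X1, X2.
  assert (W / l2 ^ 2 / c ^ 2 <= eps / 2).
  { assert (0 <= l1^2) by nra. assert (Hcc : 2 * W / l2 ^ 2 / eps < c) by lra.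
    assert (W / l2^2 / c <= eps / 2).
    { apply Rmult_le_reg_r with c; [lra|]. replace (W / l2 ^ 2 / c * c) with (W / l2^2) by (field; lra).
      apply Rmult_lt_compat_r with (r := eps / 2) in Hcc; [|lra].
      replace (2 * W / l2 ^ 2 / eps * (eps / 2)) with (W / l2^2) in Hcc by (field; lra). lra. }
    assert (0 <= W / l2^2 / c) by (apply Rle_mult_inv_pos; [apply Rle_mult_inv_pos|]; nra).
    apply Rle_trans with (W / l2 ^ 2 / c); auto.
    apply Rmult_le_reg_r with (c^2). nra.
    replace (W / l2 ^ 2 / c ^ 2 * c ^ 2) with (W / l2^2) by (field; lra).
    replace (W / l2 ^ 2 / c * c ^ 2) with (W / l2^2 * c) by (field; lra).
    assert (0 <= W / l2^2) by (apply Rle_mult_inv_pos; nra). nra. }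
  lra.
Qed.
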